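(* Consider the infinite grid graph $G=P\times P$, where $P$ is the infinite path with vertex set $\mathbb{Z}$ and edges $\{i,i+1\}$, and let $d(u,v)$ denote the length of a shortest path between nodes $u,v$ of $G$. Let $M$ be a finite nonempty set of nodes (the meeting nodes). For a configuration at time $t$, let $\lambda_t(v)\in\mathbb{N}$ be the number of robots at node $v$ (finitely many robots in total), let $c_t(m)=\sum_{v} d(v,m)\,\lambda_t(v)$, and let $W(t)=\{m\in M : c_t(m)=\min_{m'\in M}c_t(m')\}$ be the set of Weber nodes at time $t$. Let $m\in W(t)$. Suppose the configuration at time $t'$ is obtained from that at time $t$ by moving either a single robot, or $j\ge 2$ robots located together on the same node, from a node $a$ to an adjacent node $b$ with $d(b,m)=d(a,m)-1$ (i.e. along a shortest path towards $m$). Then (1) $m\in W(t')$, and (2) $W(t')\subseteq W(t)$.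
   Context: Robots are located on nodes of the grid; several robots may occupy the same node (a multiplicity). The consistency $c_t(m)$ is the sum of the distances of all robots from $m$, counted with multiplicity. *)

(* Defs.v *)
From HB Require Import structures.
From mathcomp Require Import all_boot all_order all_algebra.
From mathcomp Require Import finmap.
Set Implicit Arguments. Unset Strict Implicit. Unset Printing Implicit Defensive.
Import Order.TTheory GRing.Theory Num.Theory.
Local Open Scope fset_scope.

Definition node := (int * int)%type.

Definition grid_adj (u v : node) : bool :=
  ((u.1 == v.1) && (`|u.2 - v.2|%N == 1%N)) ||
  ((u.2 == v.2) && (`|u.1 - v.1|%N == 1%N)).

(* Shortest-path distance in the grid P x P (= the L1 / Manhattan distance). *)
Definition d (u v : node) : nat := (`|u.1 - v.1| + `|u.2 - v.2|)%N.

Definition config := {fsfun node -> nat with 0%N}.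

Definition consistency (lam : config) (m : node) : nat :=
  (\sum_(v <- finsupp lam) d v m * lam v)%N.

Definition weber (M : {fset node}) (lam : config) (m : node) : bool :=
  (m \in M) && [forall m' : M, consistency lam m <= consistency lam (val m')]%N.

(* Main.v *)
Require Import Defs.
From HB Require Import structures.
From mathcomp Require Import all_boot all_order all_algebra.
From mathcomp Require Import finmap.
From mathcomp Require Import zify.
Import Order.TTheory GRing.Theory Num.Theory.
Local Open Scope fset_scope.

Lemma cons_incl (lam : config) x (S : {fset node}) :
  finsupp lam `<=` S -> consistency lam x = (\sum_(v <- S) d v x * lam v)%N.
Proof.
move=> H; rewrite /consistency (big_fset_incl _ H) // => v _.
by rewrite memNfinsupp => /eqP ->; rewrite muln0.
Qed.

Lemma adj_d a b : grid_adj a b -> (d a b = 1)%N.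
Proof.
rewrite /grid_adj /d => /orP [/andP [/eqP -> /eqP ->]|/andP [/eqP -> /eqP ->]];
by rewrite subrr.
Qed.

Lemma d_tri a b x : (d a x <= d a b + d b x)%N.
Proof.
rewrite /d.
have h1 := leqD_dist a.1 b.1 x.1.
have h2 := leqD_dist a.2 b.2 x.2.
lia.
Qed.

Lemma sum_single (S : {fset node}) a (c : nat) : a \in S ->
  (\sum_(v <- S) (if v == a then c else 0))%N = c.
Proof.
move=> Ha; rewrite (bigD1_seq a) ?fset_uniq //= eqxx.
by rewrite big1 ?addn0 // => v /negbTE ->.
Qed.

Lemma key (lam lam' : config) a b k x :
  a != b -> (k <= lam a)%N ->
  (forall v, lam' v = (lam v - (if v == a then k else 0) + (if v == b then k else 0))%N) ->
  (consistency lam' x + k * d a x = consistency lam x + k * d b x)%N.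
Proof.
move=> ab ka H.
set S := finsupp lam `|` finsupp lam' `|` [fset a; b].
have aS : a \in S by rewrite !inE eqxx !orbT.
have bS : b \in S by rewrite !inE eqxx !orbT.
have s1 : finsupp lam `<=` S by apply/fsubsetP=> v hv; rewrite /S !inE hv.
have s2 : finsupp lam' `<=` S by apply/fsubsetP=> v hv; rewrite /S !inE hv !orbT.
rewrite (@cons_incl lam x S s1) (@cons_incl lam' x S s2).
rewrite -{1}(@sum_single S a (k * d a x) aS) -(@sum_single S b (k * d b x) bS) -!big_split /=.
apply: eq_bigr => v _; rewrite H.
case: (eqVneq v a) => [->|va].
  rewrite (negbTE ab) addn0; nia.
case: (eqVneq v b) => [->|vb]; rewrite ?subn0; nia.
Qed.

Theorem lemma1 (M : {fset node}) (lam lam' : config) (m a b : node) (k : nat) :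
  M != fset0 ->
  weber M lam m ->
  (1 <= k <= lam a)%N ->
  grid_adj a b ->
  (d b m + 1)%N = d a m ->
  (forall v, lam' v = (lam v - (if v == a then k else 0) + (if v == b then k else 0))%N) ->
  weber M lam' m /\ (forall w, weber M lam' w -> weber M lam w).
Proof.
move=> _ /andP [mM /forallP W] /andP [k1 ka] adj dm H.
have dab := @adj_d a b adj.
have ab : a != b.
  apply/eqP => E; move: dab; rewrite E /d !subrr //.
have K x := @key lam lam' a b k x ab ka H.
have T x : (d a x <= d b x + 1)%N by have := d_tri a b x; rewrite dab addnC.
have T' x : (k * d a x <= k * d b x + k)%N.
  by have := leq_mul (leqnn k) (T x); rewrite mulnDr muln1.
have Km := K m; rewrite -dm mulnDr muln1 in Km.
have c'm : (consistency lam' m + k = consistency lam m)%N by lia.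
have G x : x \in M -> (consistency lam' m <= consistency lam' x)%N.
  move=> xM; have := W [` xM]; have := K x; have := T' x; simpl; lia.
split.
  by rewrite /weber mM; apply/forallP => x; apply: G; exact: valP.
move=> w /andP [wM /forallP Ww]; rewrite /weber wM; apply/forallP => x.
have h1 := Ww [` mM]; have h2 := W x; have := K w; have := T' w; simpl in *.
have h3 := G _ wM.
lia.
Qed.
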